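(* Let $R$ be a finite commutative chain ring with maximal ideal $M=\langle a\rangle$, where $a$ has nilpotency index $t$, and residue field $\mathbb F_q$. Let $\mu=(\mu_1,\dots,\mu_r)\in H_1\times\dots\times H_r$ and let $I_\mu=\langle q_{\mu,1},z_{\mu,2},\dots,z_{\mu,r}\rangle\lhd R[X_1,\dots,X_r]$. Then $R[X_1,\dots,X_r]/I_\mu$ is a finite commutative chain ring with maximal ideal $\langle a+I_\mu\rangle$, residue field $\mathbb F_q(\mu_1,\dots,\mu_r)$, and its ideals are precisely $$\langle 0\rangle=\langle a^t+I_\mu\rangle\subsetneq\langle a^{t-1}+I_\mu\rangle\subsetneq\dots\subsetneq\langle a+I_\mu\rangle\subsetneq\langle a^0+I_\mu\rangle .$$
   Context: A finite commutative chain ring is a finite commutative local ring whose ideals are totally ordered by inclusion (equivalently, its maximal ideal is principal). Reduction modulo $M$, $r\mapsto\bar r$, is extended coefficientwise to polynomials. Let $\mathbb F$ be an algebraic closure of $\mathbb F_q$. For $i=1,\dots,r$, $t_i(X_i)\in R[X_i]$ is a monic polynomial such that $\bar t_i$ is square-free (has no repeated roots in $\mathbb F$), and $H_i\subseteq\mathbb F$ is the set of roots of $\bar t_i$. For $\mu\in H_1\times\dots\times H_r$: $p_{\mu,i}\in\mathbb F_q[X_i]$ is the minimal polynomial of $\mu_i$ over $\mathbb F_q$; for $i\ge2$, $w_{\mu,i}$ is the minimal polynomial of $\mu_i$ over $\mathbb F_q(\mu_1,\dots,\mu_{i-1})$ and $\pi_{\mu,i}=p_{\mu,i}/w_{\mu,i}$.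 By Hensel's lemma, $q_{\mu,i}\in R[X_i]$ is the unique monic factor of $t_i(X_i)$ with $\bar q_{\mu,i}=p_{\mu,i}$. Inductively, let $R_0=R$ and $R_{i-1}=R[X_1,\dots,X_{i-1}]/\langle q_{\mu,1},z_{\mu,2},\dots,z_{\mu,i-1}\rangle$ (a local ring with residue field $\mathbb F_q(\mu_1,\dots,\mu_{i-1})$, in which the image $\theta_j$ of $X_j$ lifts $\mu_j$); in $R_{i-1}[X_i]$ the monic polynomial $q_{\mu,i}$ reduces to the product of the coprime factors $w_{\mu,i}\pi_{\mu,i}$, so by Hensel's lemma $q_{\mu,i}=z_{\mu,i}\sigma_{\mu,i}$ with $z_{\mu,i},\sigma_{\mu,i}\in R_{i-1}[X_i]$ monic, coprime, reducing to $w_{\mu,i},\pi_{\mu,i}$. The polynomials $z_{\mu,i},\sigma_{\mu,i}$ are regarded as elements of $R[X_1,\dots,X_i]$ by replacing $\theta_j$ by $X_j$ (for fixed representatives of the coefficients). *)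

(* Defs.v *)
From HB Require Import structures.
From mathcomp Require Import all_boot all_order all_algebra.
From mathcomp Require Import mpoly.

Set Implicit Arguments.
Unset Strict Implicit.
Unset Printing Implicit Defensive.

Import Order.TTheory GRing.Theory.
Local Open Scope ring_scope.

Section Ideals.
Variable S : comPzRingType.

Definition is_ideal (J : S -> Prop) : Prop :=
  [/\ J 0, (forall x y, J x -> J y -> J (x + y)) &
      (forall c x, J x -> J (c * x))].

Definition principal (x : S) : S -> Prop := fun y => exists c, y = c * x.

Definition ideal_sub (J K : S -> Prop) : Prop := forall x, J x -> K x.
Definition ideal_eq (J K : S -> Prop) : Prop := forall x, J x <-> K x.

Definition is_maximal_ideal (J : S -> Prop) : Prop :=
  [/\ is_ideal J, ~ J 1 &
      forall K, is_ideal K -> ideal_sub J K -> ideal_eq K J \/ K 1].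


Definition local_ring : Prop :=
  exists M, is_maximal_ideal M /\
    forall N, is_maximal_ideal N -> ideal_eq N M.

Definition finite_ring : Prop := exists s : seq S, forall x : S, x \in s.

Definition chain_ring : Prop :=
  [/\ finite_ring, local_ring &
      forall J K, is_ideal J -> is_ideal K -> ideal_sub J K \/ ideal_sub K J].
End Ideals.

Section Fields.
Variable F : fieldType.

Definition is_subfield (K : F -> Prop) : Prop :=
  K 0 /\ K 1 /\ (forall x y, K x -> K y -> K (x + y)) /\
  (forall x, K x -> K (- x)) /\
  (forall x y, K x -> K y -> K (x * y)) /\
  (forall x, K x -> x != 0 -> K x^-1).

Definition gen_subfield (A : F -> Prop) : F -> Prop :=
  fun x => forall K, is_subfield K -> (forall y, A y -> K y) -> K x.

Definition is_minpoly (K : F -> Prop) (p : {poly F}) (x : F) : Prop :=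
  [/\ p \is monic, (forall j, K p`_j), root p x &
      forall g : {poly F}, g != 0 -> (forall j, K g`_j) -> root g x ->
        (size p <= size g)%N].
End Fields.

Section MPolyDefs.
Variables (r : nat) (R : comNzRingType).

Definition vars_below (i : nat) (p : {mpoly R[r]}) : Prop :=
  forall m, m \in msupp p -> forall j : 'I_r, (i <= j)%N -> m j = 0%N.

Definition monic_in (i : 'I_r) (p : {mpoly R[r]}) : Prop :=
  exists (d : nat) (c : nat -> {mpoly R[r]}),
    (forall k, vars_below i (c k)) /\
    p = 'X_i ^+ d + \sum_(k < d) c k * 'X_i ^+ k.

Definition liftX (i : 'I_r) (g : {poly R}) : {mpoly R[r]} :=
  (map_poly (@mpolyC r R) g).['X_i].

Definition in_ideal_gen (P : 'I_r -> bool) (gens : 'I_r -> {mpoly R[r]})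
  (p : {mpoly R[r]}) : Prop :=
  exists c : 'I_r -> {mpoly R[r]}, p = \sum_(j < r | P j) c j * gens j.
End MPolyDefs.

Section Reduction.
Variables (r : nat) (R : comNzRingType) (F : fieldType).
Variables (pi : {rmorphism R -> F}) (mu : 'I_r -> F).

(* Reduction of an element of R[X_1..X_{i-1}][X_i] to the residue field
   F_q(mu_1..mu_{i-1})[X_i]: reduce coefficients mod M, send X_j to mu_j
   for j < i and keep X_i as the variable. *)
Definition red (i : 'I_r) (p : {mpoly R[r]}) : {poly F} :=
  mmap (fun c => (pi c)%:P)
       (fun j : 'I_r => if (j < i)%N then (mu j)%:P
                        else if j == i then 'X else 0) p.

(* F_q(mu_j | j < i) inside F, where F_q = pi(R) *)
Definition Fq_adj (i : nat) : F -> Prop :=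
  gen_subfield (fun y => (exists c, y = pi c) \/
                         (exists j : 'I_r, (j < i)%N /\ y = mu j)).
End Reduction.

(* Main.v *)
Require Import Defs.
From HB Require Import structures.
From mathcomp Require Import all_boot all_order all_algebra.
From mathcomp Require Import mpoly.
From Stdlib Require Import Classical.
Import GRing.Theory.
Local Open Scope ring_scope.

Section Gen.
Variables (r : nat) (R : comNzRingType).

Lemma mmap_vars_below (B : comNzRingType) (e : R -> B) (h h' : 'I_r -> B) i (p : {mpoly R[r]}) :
  vars_below i p -> (forall k : 'I_r, (k < i)%N -> h k = h' k) ->
  mmap e h p = mmap e h' p.
Proof.
move=> vb hh; rewrite /mmap; apply: eq_big_seq => m mp; congr (_ * _).
rewrite /mmap1; apply: eq_bigr => k _.
case: (ltnP k i) => ki; first by rewrite hh.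
by rewrite (vb m mp k ki) !expr0.
Qed.

Lemma rmorph_mmap (B C : comNzRingType) (e : R -> B) (h : 'I_r -> B)
   (g : {rmorphism B -> C}) (p : {mpoly R[r]}) :
  g (mmap e h p) = mmap (g \o e) (g \o h) p.
Proof.
rewrite /mmap rmorph_sum; apply: eq_bigr => m _.
by rewrite rmorphM /mmap1 rmorph_prod; congr (_ * _); apply: eq_bigr => k _; rewrite rmorphXn.
Qed.

Lemma eq_mmap (B : comNzRingType) (e e' : R -> B) (h h' : 'I_r -> B) (p : {mpoly R[r]}) :
  e =1 e' -> h =1 h' -> mmap e h p = mmap e' h' p.
Proof.
move=> ee hh; rewrite /mmap; apply: eq_bigr => m _; rewrite ee; congr (_ * _).
exact: mmap1_eq.
Qed.

Lemma mmap_uniq (B : comPzRingType) (g : {rmorphism {mpoly R[r]} -> B}) p :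
  g p = \sum_(m <- msupp p) g (p@_m)%:MP * \prod_(k < r) (g 'X_k) ^+ m k.
Proof.
rewrite {1}(mpolyE p) rmorph_sum; apply: eq_bigr => m _.
rewrite -mul_mpolyC rmorphM mpolyXE_id rmorph_prod; congr (_ * _).
by apply: eq_bigr => k _; rewrite rmorphXn.
Qed.

Lemma mmapXi (B : comNzRingType) (e : {rmorphism R -> B}) (h : 'I_r -> B) (k : 'I_r) :
  mmap e h 'X_k = h k.
Proof. by rewrite mmapX mmap1U. Qed.

Lemma mmap_monic (B : comNzRingType) (e : {rmorphism R -> B}) (h : 'I_r -> B) (j : 'I_r) d (c : nat -> {mpoly R[r]}) :
  mmap e h ('X_j ^+ d + \sum_(k < d) c k * 'X_j ^+ k) =
  h j ^+ d + \sum_(k < d) mmap e h (c k) * h j ^+ k.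
Proof.
rewrite rmorphD rmorphXn rmorph_sum /= mmapXi; congr (_ + _); apply: eq_bigr => k _.
by rewrite rmorphM rmorphXn /= mmapXi.
Qed.

Lemma mmap_monic_in (B : comNzRingType) (e : {rmorphism R -> B}) (h h' : 'I_r -> B) (j : 'I_r) p :
  monic_in j p -> (forall k : 'I_r, (k <= j)%N -> h k = h' k) ->
  mmap e h p = mmap e h' p.
Proof.
move=> [d [c [vb ->]]] hh; rewrite !mmap_monic (hh j (leqnn _)); congr (_ + _).
apply: eq_bigr => k _; congr (_ * _); apply: mmap_vars_below (vb k) _.
by move=> l /ltnW; apply: hh.
Qed.

End Gen.

Lemma monic_form (B : nzRingType) d (b : nat -> B) :
  let P := 'X^d + \sum_(k < d) (b k)%:P * 'X^k in P \is monic /\ size P = d.+1.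
Proof.
have E : \sum_(k < d) (b k)%:P * 'X^k = \poly_(k < d) b k.
  by rewrite poly_def; apply: eq_bigr => k _; rewrite mul_polyC.
have sz : (size (\poly_(k < d) b k) < size ('X^d : {poly B}))%N.
  by rewrite size_polyXn ltnS size_poly.
move=> P; rewrite /P E; split.
  by rewrite monicE lead_coefDl // lead_coefXn.
by rewrite size_addl // size_polyXn.
Qed.

Section Main.
Variables (R : comNzRingType) (a : R) (t : nat).
Variable n : nat.
Local Notation r := n.+1.
Variables (F : fieldType) (pi : {rmorphism R -> F}) (mu : 'I_r -> F).
Variable gens : 'I_r -> {mpoly R[r]}.
Hypothesis hmon : forall j, monic_in j (gens j).
Hypothesis hmin : forall j : 'I_r, is_minpoly (Fq_adj pi mu j) (red pi mu j (gens j)) (mu j).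

Definition ev := mmap pi mu.

Definition hh (j : 'I_r) : 'I_r -> {poly F} :=
  fun k => if (k < j)%N then (mu k)%:P else if k == j then 'X else 0.

Lemma red_form (j : 'I_r) d (c : nat -> {mpoly R[r]}) :
  (forall k, vars_below j (c k)) ->
  red pi mu j ('X_j ^+ d + \sum_(k < d) c k * 'X_j ^+ k) =
  'X^d + \sum_(k < d) (ev (c k))%:P * 'X^k.
Proof.
move=> vb.
change (mmap (polyC \o pi) (hh j) ('X_j ^+ d + \sum_(k < d) c k * 'X_j ^+ k) =
  'X^d + \sum_(k < d) (ev (c k))%:P * 'X^k).
rewrite mmap_monic /hh ltnn eqxx; congr (_ + _); apply: eq_bigr => k _; congr (_ * _).
rewrite (@mmap_vars_below _ _ _ _ _ (polyC \o mu) j) //; last first.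
  by move=> l ->.
by rewrite /ev rmorph_mmap.
Qed.

Lemma gens_form (j : 'I_r) : exists d (c : nat -> {mpoly R[r]}),
  [/\ forall k, vars_below j (c k),
      gens j = 'X_j ^+ d + \sum_(k < d) c k * 'X_j ^+ k,
      red pi mu j (gens j) = 'X^d + \sum_(k < d) (ev (c k))%:P * 'X^k &
      (0 < d)%N].
Proof.
have [d [c [vb E]]] := hmon j.
exists d, c; have R1 := @red_form j d c vb; rewrite -E in R1; split => //.
case: d c vb E R1 => // c vb E R1.
have [_ _ rt _] := hmin j; move: rt; rewrite R1 big_ord0 addr0 expr0.
by rewrite /root hornerC oner_eq0.
Qed.

Definition dd (j : 'I_r) := (size (red pi mu j (gens j))).-1.

Lemma gens_form_dd (j : 'I_r) : exists (c : nat -> {mpoly R[r]}),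
  [/\ forall k, vars_below j (c k),
      gens j = 'X_j ^+ dd j + \sum_(k < dd j) c k * 'X_j ^+ k,
      red pi mu j (gens j) = 'X^(dd j) + \sum_(k < dd j) (ev (c k))%:P * 'X^k &
      (0 < dd j)%N].
Proof.
have [d [c [vb E R1 dp]]] := gens_form j.
have -> : dd j = d by rewrite /dd R1; have [_ ->] := @monic_form F d (fun k => ev (c k)).
by exists c.
Qed.

Record stage := Stage { sB : comNzRingType; semb : {rmorphism R -> sB}; sxs : 'I_r -> sB }.
Definition ys (st : stage) (i : 'I_r) : 'I_r -> {poly sB st} :=
  fun k => if (k < i)%N then (sxs st k)%:P else if k == i then 'X else 0.
Definition hpol (st : stage) (i : 'I_r) := mmap (polyC \o semb st) (ys st i) (gens i).
Definition nxt (st : stage) (i : 'I_r) : stage :=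
  @Stage {poly %/ hpol st i} (qpolyC (hpol st i) \o semb st)
   (fun k => if (k < i)%N then qpolyC (hpol st i) (sxs st k)
             else if k == i then in_qpoly (hpol st i) 'X else 0).
Fixpoint tower (k : nat) : stage :=
  if k is k'.+1 then nxt (tower k') (inord k') else @Stage R idfun (fun _ => 0).
Definition sev (st : stage) := mmap (semb st) (sxs st).

Lemma hpol_monic st i : hpol st i \is monic /\ (1 < size (hpol st i))%N.
Proof.
have [d [c [vb E _ dp]]] := gens_form i.
have -> : hpol st i = 'X^d + \sum_(k < d) (sev st (c k))%:P * 'X^k.
  have Y : ys st i i = 'X by rewrite /ys ltnn eqxx.
  rewrite /hpol E mmap_monic Y; congr (_ + _); apply: eq_bigr => k _.
  congr (_ * _).
  transitivity (mmap (polyC \o semb st) (polyC \o sxs st) (c k)).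
    by apply: mmap_vars_below (vb k) _ => l; rewrite /ys => ->.
  by rewrite /sev rmorph_mmap.
have [M S] := @monic_form _ d (fun k => sev st (c k)).
by split => //; rewrite S ltnS.
Qed.

Lemma mk_monic_hpol st i : mk_monic (hpol st i) = hpol st i.
Proof. by have [M S] := hpol_monic st i; rewrite /mk_monic M S. Qed.

Lemma in_qpolyC_eq (B : comNzRingType) (h : {poly B}) (c : B) : in_qpoly h c%:P = qpolyC h c.
Proof.
apply: val_inj => /=; rewrite Pdiv.CommonRing.rmodp_small //.
by rewrite (leq_ltn_trans (size_polyC_leq1 c)) // size_mk_monic_gt1.
Qed.

Lemma sev_nxt_gens st i : sev (nxt st i) (gens i) = 0.
Proof.
set h := hpol st i.
have -> : sev (nxt st i) (gens i) = in_qpoly h h.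
  rewrite /h /hpol rmorph_mmap /sev /=; apply: eq_mmap => [c|k] /=.
    by rewrite in_qpolyC_eq.
  rewrite /ys; case: ifP => _; first by rewrite in_qpolyC_eq.
  by case: ifP => _ //; rewrite rmorph0.
apply: val_inj => /=; rewrite mk_monic_hpol.
by apply: Pdiv.RingMonic.rmodpp; have [] := hpol_monic st i.
Qed.

Lemma sev_nxt_lift st (i : 'I_r) (j : 'I_r) (p : {mpoly R[r]}) : monic_in j p -> (j < i)%N ->
  sev (nxt st i) p = qpolyC (hpol st i) (sev st p).
Proof.
move=> mp ji; rewrite /sev rmorph_mmap /=; apply: mmap_monic_in mp _ => k kj /=.
by rewrite (leq_ltn_trans kj ji).
Qed.

Lemma tower_gens k : (k <= r)%N -> forall j : 'I_r, (j < k)%N -> sev (tower k) (gens j) = 0.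
Proof.
elim: k => // k IH kr j; rewrite ltnS leq_eqVlt => /orP [/eqP jk | jk] /=.
  have -> : inord k = j by apply: val_inj; rewrite /= inordK // -jk.
  exact: sev_nxt_gens.
rewrite (@sev_nxt_lift _ _ j) ?IH ?rmorph0 ?(ltnW kr) //.
by rewrite inordK.
Qed.

Lemma tower_inj k : injective (semb (tower k)).
Proof.
elim: k => [|k IH] //= x y /(congr1 val) /= /polyC_inj.
exact: IH.
Qed.

Lemma ideal_const (c : R) : in_ideal_gen (fun _ => true) gens c%:MP -> c = 0.
Proof.
move=> [cf E]; apply: (@tower_inj r); rewrite rmorph0.
have := congr1 (sev (tower r)) E; rewrite /sev mmapC => ->.
rewrite rmorph_sum big1 // => j _; rewrite rmorphM /=.
have := @tower_gens r (leqnn _) j (ltn_ord j); rewrite /sev /= => ->; by rewrite mulr0.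
Qed.

Section SPart.
Variables (S : comPzRingType) (f : {rmorphism {mpoly R[r]} -> S}).
Hypothesis fsurj : forall y, exists p, f p = y.
Hypothesis fker : forall p, f p = 0 <-> in_ideal_gen (fun _ => true) gens p.

Definition io (c : R) := f c%:MP.
Definition xx (k : 'I_r) := f 'X_k.

Lemma f_expand p : f p = \sum_(m <- msupp p) io (p@_m) * \prod_(k < r) xx k ^+ m k.
Proof. exact: mmap_uniq. Qed.

Lemma f_gens j : f (gens j) = 0.
Proof.
apply/fker; exists (fun k => (k == j)%:R).
rewrite (bigD1 j) //= eqxx mul1r big1 ?addr0 // => k /negbTE ->; by rewrite mul0r.
Qed.

Lemma y_rel (j : 'I_r) : exists c : nat -> {mpoly R[r]}, (forall k, vars_below j (c k)) /\
  xx j ^+ dd j = - \sum_(k < dd j) f (c k) * xx j ^+ k.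
Proof.
have [c [vb E _ _]] := gens_form_dd j; exists c; split => //.
have := f_gens j; rewrite E rmorphD rmorphXn rmorph_sum /= => /eqP; rewrite addr_eq0 => /eqP ->.
by congr (- _); apply: eq_bigr => k _; rewrite rmorphM rmorphXn.
Qed.

Fixpoint Gp (i : nat) : S -> Prop :=
  if i is i'.+1 then fun s => exists g : nat -> S, (forall k, Gp i' (g k)) /\
     s = \sum_(k < dd (inord i')) g k * xx (inord i') ^+ k
  else fun s => exists c, s = io c.

Definition closed i := [/\ (forall s s', Gp i s -> Gp i s' -> Gp i (s + s')),
  (forall s s', Gp i s -> Gp i s' -> Gp i (s * s')),
  (forall c, Gp i (io c)) & (forall k : 'I_r, (k < i)%N -> Gp i (xx k))].

Lemma Gp0 i : closed i -> Gp i 0.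
Proof. by case=> _ _ hc _; rewrite -(rmorph0 f); apply: (hc 0). Qed.

Lemma Gp1 i : closed i -> Gp i 1.
Proof. by case=> _ _ hc _; rewrite -(rmorph1 f); apply: (hc 1). Qed.

Lemma Gp_pow i u m : closed i -> Gp i u -> Gp i (u ^+ m).
Proof.
move=> C hu; elim: m => [|m IH]; first by rewrite expr0; apply: Gp1.
by rewrite exprS; case: C => _ hm _ _; apply: hm.
Qed.

Lemma Gp_sum i (I : Type) (rs : seq I) (P : pred I) (Fn : I -> S) : closed i ->
  (forall k, P k -> Gp i (Fn k)) -> Gp i (\big[+%R/0]_(k <- rs | P k) Fn k).
Proof.
move=> C hF; apply: big_ind => //; first exact: Gp0.
by case: C.
Qed.

Lemma Gp_vb i (j : nat) p : closed i -> vars_below j p -> (j <= i)%N -> Gp i (f p).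
Proof.
move=> C vb ji; rewrite f_expand big_seq; apply: Gp_sum => // m mp.
have [_ hm hc hx] := C; apply: (hm) => //.
apply: (big_ind (Gp i)); [exact: Gp1 | exact: hm | ].
move=> k _; case: (ltnP k j) => kj.
  by apply: Gp_pow => //; apply: hx; apply: leq_trans ji.
by rewrite (vb m mp k kj) expr0; apply: Gp1.
Qed.

Lemma ioD c c' : io (c + c') = io c + io c'.
Proof. by rewrite /io !rmorphD. Qed.
Lemma ioM c c' : io (c * c') = io c * io c'.
Proof. by rewrite /io !rmorphM. Qed.
Lemma io1 : io 1 = 1.
Proof. by rewrite /io !rmorph1. Qed.
Lemma io0 : io 0 = 0.
Proof. by rewrite /io !rmorph0. Qed.
Lemma ioN1 x : - x = io (-1) * x.
Proof. by rewrite /io !rmorphN !rmorph1 mulN1r. Qed.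

Lemma inord_le i : (val (inord i : 'I_r) <= i)%N.
Proof. by rewrite /inord /insubd; case: insubP => //= u _ ->. Qed.

Lemma Gp_closed i : closed i.
Proof.
elim: i => [|i C].
  split => //=.
  - by move=> _ _ [c ->] [c' ->]; exists (c + c'); rewrite ioD.
  - by move=> _ _ [c ->] [c' ->]; exists (c * c'); rewrite ioM.
  - by move=> c; exists c.
set j : 'I_r := inord i.
have jle : (val j <= i)%N by apply: inord_le.
have [D' DE] : exists D', dd j = D'.+1.
  by have [_ [_ _ _]] := gens_form_dd j; case: (dd j) => // D' _; exists D'.
set y := xx j.
have GS : forall s, Gp i.+1 s <-> exists g : nat -> S, (forall k, Gp i (g k)) /\
     s = \sum_(k < D'.+1) g k * y ^+ k.
  by move=> s; rewrite /= -/j -DE.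
have [Cadd Cmul Cio Cx] := C.
have G0 := @Gp0 i C.
have emb : forall s, Gp i s -> Gp i.+1 s.
  move=> s hs; apply/GS; exists (fun k => if k == 0%N then s else 0); split.
    by move=> k; case: ifP.
  by rewrite big_ord_recl /= expr0 mulr1 big1 ?addr0 // => k _; rewrite mul0r.
have add : forall s s', Gp i.+1 s -> Gp i.+1 s' -> Gp i.+1 (s + s').
  move=> s s' /GS [g [hg ->]] /GS [g' [hg' ->]]; apply/GS.
  exists (fun k => g k + g' k); split; first by move=> k; apply: (Cadd).
  by rewrite -big_split /=; apply: eq_bigr => k _; rewrite mulrDl.
have mulC : forall u s, Gp i u -> Gp i.+1 s -> Gp i.+1 (u * s).
  move=> u s hu /GS [g [hg ->]]; apply/GS.
  exists (fun k => u * g k); split; first by move=> k; apply: (Cmul).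
  by rewrite mulr_sumr; apply: eq_bigr => k _; rewrite mulrA.
have [c [vbc yrel]] := y_rel j.
rewrite DE -/y in yrel.
have Gc : forall k, Gp i (f (c k)) by move=> k; exact: (@Gp_vb i j (c k) C (vbc k) jle).
have mulY : forall s, Gp i.+1 s -> Gp i.+1 (s * y).
  move=> s /GS [g [hg ->]]; apply/GS.
  exists (fun k => (if k is k'.+1 then g k' else 0) - g D' * f (c k)); split.
    move=> k; apply: (Cadd); first by case: k.
    by rewrite ioN1; apply: (Cmul) => //; apply: (Cmul).
  rewrite mulr_suml big_ord_recr /=.
  rewrite (eq_bigr (fun k : 'I_D'.+1 => (if nat_of_ord k is k'.+1 then g k' else 0) * y ^+ k
     - g D' * f (c k) * y ^+ k)); last by move=> k _; rewrite mulrBl.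
  rewrite sumrB big_ord_recl /= mul0r add0r.
  have -> : \sum_(k < D'.+1) g D' * f (c k) * y ^+ k = - (g D' * y ^+ D'.+1).
    by rewrite yrel mulrN opprK mulr_sumr; apply: eq_bigr => k _; rewrite mulrA.
  rewrite opprK; congr (_ + _); last by rewrite -mulrA -exprSr.
  by apply: eq_bigr => k _; rewrite /bump /= add1n -mulrA -exprSr.
have mulYn : forall s m, Gp i.+1 s -> Gp i.+1 (s * y ^+ m).
  move=> s m hs; elim: m => [|m IH]; first by rewrite expr0 mulr1.
  by rewrite exprSr mulrA; apply: (mulY).
have G1 : Gp i.+1 0 by apply: (emb).
split.
- exact: add.
- move=> s s' /GS [g [hg ->]] hs'.
  rewrite mulr_suml; apply: (big_ind (Gp i.+1)) => // k _.
  by rewrite mulrAC -mulrA; apply: (mulC) => //; apply: (mulYn).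
- by move=> c0; apply: (emb).
- move=> k; rewrite ltnS leq_eqVlt => /orP [/eqP ki | ki]; last by apply: (emb); apply: (Cx).
  have -> : k = j by apply: val_inj; rewrite /j /= inordK // -ki.
  rewrite -[xx j]mul1r; apply: (mulY); apply: (emb); exact: Gp1.
Qed.

Lemma Gp_all s : Gp r s.
Proof.
have [p <-] := fsurj s; apply: (@Gp_vb r r p (Gp_closed r)) => // m _ k.
by rewrite leqNgt ltn_ord.
Qed.

Fixpoint sums (L : seq S) (y : S) (m : nat) : seq S :=
  if m is m'.+1 then [seq s + l * y ^+ m' | s <- sums L y m', l <- L] else [:: 0].

Lemma sums_mem L y m (g : nat -> S) : (forall k, g k \in L) ->
  \sum_(k < m) g k * y ^+ k \in sums L y m.
Proof.
move=> hg; elim: m => [|m IH] /=; first by rewrite big_ord0 mem_seq1.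
by rewrite big_ord_recr /=; apply: (allpairs_f (fun s l => s + l * y ^+ m)).
Qed.

Variable sR : seq R.
Hypothesis sRP : forall x, x \in sR.

Lemma Gp_fin i : exists L : seq S, forall s, Gp i s -> s \in L.
Proof.
elim: i => [|i [L HL]].
  by exists (map io sR) => s [c ->]; apply: map_f.
exists (sums L (xx (inord i)) (dd (inord i))) => s /= [g [hg ->]].
by apply: sums_mem => k; apply: HL.
Qed.

Lemma S_finite : finite_ring S.
Proof. by have [L HL] := Gp_fin r; exists L => x; apply: HL; apply: Gp_all. Qed.

Lemma ev_gens j : ev (gens j) = 0.
Proof.
have [c [vb E R1 _]] := gens_form_dd j; have [_ _ rt _] := hmin j.
move: rt; rewrite /root R1 => /eqP rt.
rewrite E /ev mmap_monic; apply: etrans _ rt.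
rewrite hornerD horner_sum hornerXn; congr (_ + _).
by apply: eq_bigr => k _; rewrite hornerCM hornerXn.
Qed.

Lemma ev_ideal p : in_ideal_gen xpredT gens p -> ev p = 0.
Proof.
move=> [cf ->]; rewrite /ev rmorph_sum big1 // => j _.
by rewrite rmorphM /=; have := ev_gens j; rewrite /ev => ->; rewrite mulr0.
Qed.

Lemma fsurjb s : exists p, f p == s.
Proof. by have [p e] := fsurj s; exists p; rewrite e. Qed.

Definition phi (s : S) : F := ev (xchoose (fsurjb s)).

Lemma phi_f p : phi (f p) = ev p.
Proof.
rewrite /phi; set p' := xchoose _; have /eqP e := xchooseP (fsurjb (f p)).
have : f (p' - p) = 0 by rewrite rmorphB e subrr.
move/fker/ev_ideal; rewrite /ev rmorphB => /eqP; rewrite subr_eq0 => /eqP.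
by [].
Qed.

Lemma phi_zmod : zmod_morphism phi.
Proof.
move=> x y; have [p <-] := fsurj x; have [q <-] := fsurj y.
by rewrite -rmorphB !phi_f /ev rmorphB.
Qed.

Lemma phi_monoid : monoid_morphism phi.
Proof.
split; first by rewrite -(rmorph1 f) phi_f /ev rmorph1.
move=> x y; have [p <-] := fsurj x; have [q <-] := fsurj y.
by rewrite -rmorphM !phi_f /ev rmorphM.
Qed.

HB.instance Definition _ := GRing.isZmodMorphism.Build S F phi phi_zmod.
HB.instance Definition _ := GRing.isMonoidMorphism.Build S F phi phi_monoid.

Lemma phi_io c : phi (io c) = pi c.
Proof. by rewrite /io phi_f /ev mmapC. Qed.

Lemma phi_xx k : phi (xx k) = mu k.
Proof. by rewrite /xx phi_f /ev mmapXi. Qed.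

Local Notation K := (Fq_adj pi mu).

Lemma KD i y1 y2 : K i y1 -> K i y2 -> K i (y1 + y2).
Proof. rewrite /Fq_adj /gen_subfield => h1 h2 L LS hA; have [_ [_ [LD _]]] := LS; apply: LD; [exact: h1 | exact: h2]. Qed.
Lemma KM i y1 y2 : K i y1 -> K i y2 -> K i (y1 * y2).
Proof. rewrite /Fq_adj /gen_subfield => h1 h2 L LS hA; have [_ [_ [_ [_ [LM _]]]]] := LS; apply: LM; [exact: h1 | exact: h2]. Qed.
Lemma K0 i : K i 0.
Proof. by rewrite /Fq_adj /gen_subfield => L [L0 _] _. Qed.
Lemma K1 i : K i 1.
Proof. by rewrite /Fq_adj /gen_subfield => L [_ [L1 _]] _. Qed.
Lemma Kpi i c : K i (pi c).
Proof. by rewrite /Fq_adj /gen_subfield => L _ hA; apply: hA; left; exists c. Qed.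
Lemma Kmu i (j : 'I_r) : (j < i)%N -> K i (mu j).
Proof. by rewrite /Fq_adj /gen_subfield => ji L _ hA; apply: hA; right; exists j. Qed.
Lemma Kmono i i' y : (i <= i')%N -> K i y -> K i' y.
Proof.
rewrite /Fq_adj /gen_subfield => ii' h L LS hA; apply: h => // z [[c ->]|[j [ji ->]]]; apply: hA; first by left; exists c.
by right; exists j; split => //; apply: leq_trans ii'.
Qed.
Lemma KX i y m : K i y -> K i (y ^+ m).
Proof. by move=> h; elim: m => [|m IH]; [rewrite expr0; apply: K1 | rewrite exprS; apply: KM]. Qed.

Lemma phi_Gp i s : Gp i s -> K i (phi s).
Proof.
elim: i s => [|i IH] s /=; first by move=> [c ->]; rewrite phi_io; apply: Kpi.
move=> [g [hg ->]]; rewrite rmorph_sum; apply: (big_ind (K i.+1)); [exact: K0 | exact: KD |].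
move=> k _; rewrite rmorphM rmorphXn /= phi_xx; apply: KM.
  by apply: (@Kmono i) => //; apply: IH.
by apply: KX; apply: Kmu; rewrite ltnS inord_le.
Qed.

Definition abar := io a.
Hypothesis hpi : forall c, pi c = 0 <-> principal a c.

Lemma princD (x y : S) b : principal b x -> principal b y -> principal b (x + y).
Proof. by move=> [c1 ->] [c2 ->]; exists (c1 + c2); rewrite mulrDl. Qed.
Lemma princM (x y : S) b : principal b x -> principal b (y * x).
Proof. by move=> [c1 ->]; exists (y * c1); rewrite mulrA. Qed.
Lemma princ0 (b : S) : principal b 0.
Proof. by exists 0; rewrite mul0r. Qed.

Lemma size_red j : size (red pi mu j (gens j)) = (dd j).+1.
Proof.
rewrite /dd prednK // lt0n size_poly_eq0.
by have [M _ _ _] := hmin j; apply: monic_neq0.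
Qed.

Lemma phi_ker_Gp i s : (i <= r)%N -> Gp i s -> phi s = 0 -> principal abar s.
Proof.
elim: i s => [|i IH] s ir /=.
  by move=> [c ->]; rewrite phi_io => /hpi [e ->]; exists (io e); rewrite /abar ioM.
move=> [g [hg ->]]; set j : 'I_r := inord i.
have ji : nat_of_ord j = i by rewrite /j inordK.
set D := dd j; set y := xx j => phi0.
set P := \poly_(k < D) phi (g k).
have P0 : P = 0.
  apply/eqP; apply: contraT => Pn0.
  have [_ _ _ mn] := hmin j.
  have := mn P Pn0; rewrite size_red => /(_ _) /(_ _).
  have Pc : forall k, K j P`_k.
    move=> k; rewrite coef_poly; case: ifP => _; last exact: K0.
    by rewrite ji; apply: phi_Gp.
  have Pr : root P (mu j).
    apply/eqP; rewrite horner_poly; apply: etrans _ phi0; rewrite rmorph_sum.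
    by apply: eq_bigr => k _; rewrite rmorphM rmorphXn /= phi_xx.
  move=> /(_ Pc Pr); rewrite ltnNge (size_poly D) //.
apply: (big_ind (principal abar)); [exact: princ0 | move=> x1 x2 [c1 ->] [c2 ->]; exists (c1 + c2); by rewrite mulrDl |].
move=> k _; rewrite mulrC; apply: princM; apply: IH => //; first exact: ltnW.
by have := congr1 (fun p : {poly F} => p`_k) P0; rewrite coef_poly ltn_ord coef0.
Qed.

Lemma phi_ker s : phi s = 0 <-> principal abar s.
Proof.
split; first exact: phi_ker_Gp (leqnn r) (Gp_all s).
move=> [c ->]; rewrite rmorphM /= /abar phi_io.
have -> : pi a = 0 by apply/hpi; exists 1; rewrite mul1r.
by rewrite mulr0.
Qed.

Hypothesis ht : a ^+ t = 0.
Hypothesis ht' : forall k, (k < t)%N -> a ^+ k != 0.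

Lemma ioX c m : io (c ^+ m) = io c ^+ m.
Proof. by rewrite /io !rmorphXn. Qed.

Lemma abar_t : abar ^+ t = 0.
Proof. by rewrite /abar -ioX ht io0. Qed.

Lemma img_inv s : phi s != 0 -> exists v, phi v = (phi s)^-1.
Proof.
move=> ns; have [L HL] := S_finite.
set ps := [seq s ^+ k | k <- iota 0 (size L).+1].
have : ~~ uniq ps.
  apply/negP => u; have := uniq_leq_size u (fun x _ => HL x).
  by rewrite size_map size_iota ltnn.
case/(uniqPn 0) => i [j [ij]]; rewrite size_map size_iota => jsz.
rewrite !(nth_map 0%N) ?size_iota ?(ltn_trans ij) // !nth_iota ?(ltn_trans ij) // !add0n => E.
have := congr1 phi E; rewrite !rmorphXn; set y := phi s.
have [m jm] : exists m, j = (i + m.+1)%N by exists (j - i.+1)%N; rewrite addnS -addSn subnKC.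
have yi : y ^+ i != 0 by rewrite expf_neq0.
rewrite jm exprD -{1}[y ^+ i]mulr1 => /(mulfI yi) E1.
exists (s ^+ m); rewrite rmorphXn; apply: (mulfI ns); rewrite mulfV // -exprS.
by rewrite -/y E1.
Qed.

Lemma unit_of s : phi s != 0 -> exists v, s * v = 1.
Proof.
move=> ns; have [v0 hv0] := img_inv s ns.
have : phi (s * v0 - 1) = 0 by rewrite rmorphB rmorphM rmorph1 /= hv0 mulfV // subrr.
move/phi_ker => [e he].
have E : s * v0 = 1 + e * abar by rewrite -he addrC subrK.
set x := - (e * abar).
exists (v0 * \sum_(k < t) x ^+ k).
rewrite mulrA E.
have xt : x ^+ t = 0 by rewrite /x -mulN1r !exprMn abar_t !mulr0.
have := subrX1 x t; rewrite xt sub0r => H.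
have -> : 1 + e * abar = - (x - 1) by rewrite /x opprB opprK addrC.
by rewrite mulNr -H opprK.
Qed.

Lemma unit_notin x : ~ principal abar x -> exists v, x * v = 1.
Proof. by move=> nx; apply: unit_of; apply/eqP => /phi_ker. Qed.

Lemma not_princ1 : ~ principal abar 1.
Proof. by move/phi_ker; rewrite rmorph1; apply/eqP; exact: oner_neq0. Qed.

Lemma princ_ideal (b : S) : is_ideal (principal b).
Proof.
split; first by exists 0; rewrite mul0r.
  by move=> x y [c1 ->] [c2 ->]; exists (c1 + c2); rewrite mulrDl.
by move=> c x [c1 ->]; exists (c * c1); rewrite mulrA.
Qed.

Lemma abar_max : is_maximal_ideal (principal abar).
Proof.
split; [exact: princ_ideal | exact: not_princ1 |].
move=> K0 [K00 KD0 KM0] sub.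
case: (classic (exists x, K0 x /\ ~ principal abar x)) => [[x [kx nx]]|H].
  right; have [v hv] := unit_notin _ nx; rewrite -hv mulrC; exact: KM0.
left=> x; split; last exact: sub.
by move=> kx; apply: NNPP => nx; apply: H; exists x.
Qed.

Lemma S_local : local_ring S.
Proof.
exists (principal abar); split; first exact: abar_max.
move=> N [[N0 ND NM] N1 Nmax].
have sub : ideal_sub N (principal abar).
  move=> x nx; apply: NNPP => px; have [v hv] := unit_notin _ px.
  by apply: N1; rewrite -hv mulrC; apply: NM.
case: (Nmax (principal abar) (princ_ideal _) sub) => [E|/not_princ1 //].
by move=> x; split => [/sub // | /E].
Qed.

Lemma ideals_class K0 : is_ideal K0 -> exists k, (k <= t)%N /\ ideal_eq K0 (principal (abar ^+ k)).
Proof.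
move=> [K00 KD0 KM0].
have main : forall m, (m <= t)%N -> (exists k, (k <= t)%N /\ ideal_eq K0 (principal (abar ^+ k)))
    \/ ideal_sub K0 (principal (abar ^+ m)).
  elim=> [|m IH] mt.
    by right => x _; exists x; rewrite expr0 mulr1.
  case: (IH (ltnW mt)) => [L|sub]; first by left.
  case: (classic (ideal_sub K0 (principal (abar ^+ m.+1)))) => [s1|ns1]; first by right.
  left; exists m; split; first exact: ltnW.
  have [y [ky ny]] : exists y, K0 y /\ ~ principal (abar ^+ m.+1) y.
    apply: NNPP => H; apply: ns1 => y ky; apply: NNPP => ny; apply: H; by exists y.
  have [c hc] := sub y ky.
  have nc : ~ principal abar c.
    by move=> [c' hc']; apply: ny; exists c'; rewrite hc hc' exprS mulrA.
  have [v hv] := unit_notin _ nc.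
  have Km : K0 (abar ^+ m).
    have -> : abar ^+ m = v * y by rewrite hc mulrA [v * c]mulrC hv mul1r.
    exact: KM0.
  move=> x; split; first exact: sub.
  by move=> [d ->]; apply: KM0.
case: (main t (leqnn t)) => // sub; exists t; split => // x; split; first exact: sub.
by move=> [d ->]; rewrite abar_t mulr0.
Qed.

Lemma S_chain : chain_ring S.
Proof.
split; [exact: S_finite | exact: S_local |].
move=> J K0 hJ hK; have [k1 [_ E1]] := ideals_class _ hJ; have [k2 [_ E2]] := ideals_class _ hK.
case: (leqP k1 k2) => k12.
  right => x /E2 [c ->]; apply/E1; exists (c * abar ^+ (k2 - k1)).
  by rewrite -mulrA -exprD subnK.
left => x /E1 [c ->]; apply/E2; exists (c * abar ^+ (k1 - k2)).
by rewrite -mulrA -exprD subnK // ltnW.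
Qed.

Lemma abar_strict k : (k < t)%N -> ~ principal (abar ^+ k.+1) (abar ^+ k).
Proof.
move=> kt [c hc].
have nc : ~ principal abar (1 - c * abar).
  move=> H; apply: not_princ1.
  have -> : (1 : S) = (1 - c * abar) + c * abar by rewrite subrK.
  by case: H => [d ->]; exists (d + c); rewrite mulrDl.
have [v hv] := unit_notin _ nc.
have Z : abar ^+ k = 0.
  rewrite -[abar ^+ k]mulr1 -hv mulrA mulrBr mulr1.
  have -> : abar ^+ k * (c * abar) = abar ^+ k by rewrite mulrCA -exprSr -hc.
  by rewrite subrr mul0r.
have : abar ^+ t.-1 = 0.
  by rewrite -(subnK (_ : k <= t.-1)%N) ?exprD ?Z ?mulr0 // -ltnS prednK // (leq_ltn_trans _ kt).
rewrite /abar -ioX => /fker /ideal_const H.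
have tt : (t.-1 < t)%N by rewrite prednK // (leq_ltn_trans _ kt).
by have := ht' _ tt; rewrite H eqxx.
Qed.

Lemma img_K y : (exists x, phi x = y) <-> K r y.
Proof.
split; first by move=> [x <-]; apply: phi_Gp; apply: Gp_all.
move=> ky; apply: (ky (fun y => exists x, phi x = y)).
  do ![split]; first by exists 0; rewrite rmorph0.
  - by exists 1; rewrite rmorph1.
  - by move=> _ _ [x1 <-] [x2 <-]; exists (x1 + x2); rewrite rmorphD.
  - by move=> _ [x1 <-]; exists (- x1); rewrite rmorphN.
  - by move=> _ _ [x1 <-] [x2 <-]; exists (x1 * x2); rewrite rmorphM.
  - by move=> _ [x1 <-] nx; apply: img_inv.
move=> z [[c ->]|[j [jr ->]]]; first by exists (io c); rewrite phi_io.
by exists (xx j); rewrite phi_xx.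
Qed.

Lemma mainS : [/\ chain_ring S,
      is_maximal_ideal (principal abar),
      (exists phi : {rmorphism S -> F},
          (forall x, phi x = 0 <-> principal abar x) /\
          (forall y, (exists x, phi x = y) <-> K r y)),
      (abar ^+ t = 0 /\
       forall k, (k < t)%N -> ~ principal (abar ^+ k.+1) (abar ^+ k)) &
      (forall K0, is_ideal K0 -> exists k, (k <= t)%N /\
                                ideal_eq K0 (principal (abar ^+ k)))].
Proof.
split; [exact: S_chain | exact: abar_max | | | exact: ideals_class].
  by exists phi; split; [exact: phi_ker | exact: img_K].
by split; [exact: abar_t | exact: abar_strict].
Qed.

End SPart.
End Main.

Section LiftX.
Variables (r : nat) (R : comNzRingType).

Lemma liftX_form (j : 'I_r) (g : {poly R}) : g \is monic ->
  liftX j g = 'X_j ^+ (size g).-1 + \sum_(k < (size g).-1) (g`_k)%:MP * 'X_j ^+ k.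
Proof.
move=> gm; set d := (size g).-1.
have sg : size g = d.+1 by rewrite prednK // lt0n size_poly_eq0 monic_neq0.
rewrite /liftX (@horner_coef_wide _ d.+1); last by rewrite -sg; exact: size_poly.
rewrite big_ord_recr /= addrC; congr (_ + _).
  by rewrite coef_map /= -{1}[d]/((d.+1).-1) -sg -lead_coefE (monicP gm) mul1r.
by apply: eq_bigr => k _; rewrite coef_map.
Qed.

Lemma monic_liftX (j : 'I_r) (g : {poly R}) : g \is monic -> monic_in j (liftX j g).
Proof.
move=> gm; exists (size g).-1, (fun k => (g`_k)%:MP); split; last exact: liftX_form.
move=> k m; rewrite msuppC; case: eqP => // _; rewrite mem_seq1 => /eqP -> l _.
by rewrite mnm0E.
Qed.

Lemma red_liftX (F : fieldType) (pi : {rmorphism R -> F}) (mu : 'I_r -> F) (j : 'I_r) (g : {poly R}) :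
  red pi mu j (liftX j g) = map_poly pi g.
Proof.
rewrite /liftX (@horner_coef_wide _ (size g)); last exact: size_poly.
change (mmap (polyC \o pi) (fun k : 'I_r => if (k < j)%N then (mu k)%:P else if k == j then 'X else 0) (\sum_(i < size g) (map_poly (@mpolyC r R) g)`_i * 'X_j ^+ i) =
  map_poly pi g).
transitivity (\sum_(i < size g) (pi g`_i)%:P * 'X^i); last first.
  by rewrite [RHS]/map_poly poly_def; apply: eq_bigr => k _; rewrite mul_polyC.
rewrite rmorph_sum; apply: eq_bigr => k _.
by rewrite rmorphM rmorphXn /= mmapXi ltnn eqxx coef_map /= mmapC.
Qed.

End LiftX.

Theorem mainTheorem1
  (* R : finite commutative chain ring, maximal ideal M = <a>, a of
     nilpotency index t *)
  (R : comNzRingType) (a : R) (t : nat)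
  (hR : chain_ring R)
  (hM : is_maximal_ideal (principal a))
  (ht : a ^+ t = 0) (ht' : forall k, (k < t)%N -> a ^+ k != 0)
  (* F : an algebraic closure of the residue field F_q = R/M, with
     pi : R -> R/M -> F the reduction map *)
  (F : closedFieldType) (pi : {rmorphism R -> F})
  (hpi : forall c, pi c = 0 <-> principal a c)
  (hFalg : forall x : F, exists g : {poly R},
      map_poly pi g != 0 /\ root (map_poly pi g) x)
  (* r variables; t_i monic with square-free reduction, mu_i root of it *)
  (r : nat) (hr : (0 < r)%N)
  (tp : 'I_r -> {poly R})
  (htmon : forall i, tp i \is monic)
  (htsq : forall i (x : F), ~~ (('X - x%:P) ^+ 2 %| map_poly pi (tp i)))
  (mu : 'I_r -> F)
  (hmu : forall i, root (map_poly pi (tp i)) (mu i))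
  (* q_{mu,i} : the monic factor of t_i reducing to p_{mu,i} *)
  (q : 'I_r -> {poly R})
  (hqmon : forall i, q i \is monic)
  (hqdvd : forall i, exists s : {poly R}, tp i = q i * s)
  (hqred : forall i, is_minpoly (Fq_adj pi mu 0) (map_poly pi (q i)) (mu i))
  (* z_{mu,i}, sigma_{mu,i} for i >= 2 (0-based: i >= 1), lifted to R[X] *)
  (z sig : 'I_r -> {mpoly R[r]}) :
  let gens := fun j : 'I_r =>
    if val j == 0%N then liftX j (q j) else z j in
  let J := fun i : nat => in_ideal_gen (fun j : 'I_r => (j < i)%N) gens in
  (forall i : 'I_r, (0 < i)%N ->
     [/\ monic_in i (z i), monic_in i (sig i),
         J i (liftX i (q i) - z i * sig i),
         (exists A B, J i (A * z i + B * sig i - 1)) &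
         is_minpoly (Fq_adj pi mu i) (red pi mu i (z i)) (mu i) /\
         red pi mu i (sig i) = map_poly pi (q i) %/ red pi mu i (z i)]) ->
  (* I_mu = <q_{mu,1}, z_{mu,2}, ..., z_{mu,r}> ; S = R[X]/I_mu, given by
     a surjective ring morphism f with kernel I_mu *)
  let I := in_ideal_gen (fun _ => true) gens in
  forall (S : comPzRingType) (f : {rmorphism {mpoly R[r]} -> S}),
  (forall y : S, exists p, f p = y) ->
  (forall p, f p = 0 <-> I p) ->
  let abar := f (a%:MP) in
  [/\ chain_ring S,
      is_maximal_ideal (principal abar),
      (exists phi : {rmorphism S -> F},
          (forall x, phi x = 0 <-> principal abar x) /\
          (forall y, (exists x, phi x = y) <-> Fq_adj pi mu r y)),
      (abar ^+ t = 0 /\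
       forall k, (k < t)%N -> ~ principal (abar ^+ k.+1) (abar ^+ k)) &
      (forall K, is_ideal K -> exists k, (k <= t)%N /\
                                ideal_eq K (principal (abar ^+ k)))].
Proof.
destruct r as [|n]; first by rewrite ltnn in hr.
move=> gens J Hz I S f fsurj fker abar.
have hmon : forall j : 'I_n.+1, monic_in j (gens j).
  move=> j; rewrite /gens; case: eqP => [j0|jn0]; first exact: monic_liftX.
  have j0 : (0 < j)%N by rewrite lt0n; apply/eqP.
  by have [] := Hz j j0.
have hmin : forall j : 'I_n.+1, is_minpoly (Fq_adj pi mu j) (red pi mu j (gens j)) (mu j).
  move=> j; rewrite /gens; case: eqP => [j0|jn0].
    by rewrite red_liftX j0; exact: hqred.
  have j0 : (0 < j)%N by rewrite lt0n; apply/eqP.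
  by have [_ _ _ _ []] := Hz j j0.
have [sR sRP] : exists s : seq R, forall x : R, x \in s by case: hR => [[s hs] _ _]; exists s.
apply: mainS; try eassumption. all: try exact: hmon. all: try exact: hmin.
Qed.
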